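(* Let $\Lambda=(W_j,\Lambda_j,v_j)_{j\in\mathbb{J}}$ be a g-fusion frame for $H$ with g-fusion frame operator $S_\Lambda$, let $\mathbb{I}\subseteq\mathbb{J}$, and set $S_{\mathbb{I}}f:=\sum_{j\in\mathbb{I}}v_j^2\pi_{W_j}\Lambda_j^*\Lambda_j\pi_{W_j}f$. Then $$0\le S_{\mathbb{I}}-S_{\mathbb{I}}S_\Lambda^{-1}S_{\mathbb{I}}\le\frac14 S_\Lambda$$ in the order of self-adjoint operators.
   Context: $H$ is a separable Hilbert space, $\mathbb{J}\subseteq\mathbb{Z}$, $\{H_j\}_{j\in\mathbb{J}}$ are separable Hilbert spaces, $\Lambda_j\in\mathcal{B}(H,H_j)$, $W_j$ are closed subspaces of $H$, $v_j>0$, and $\pi_V$ denotes the orthogonal projection onto a closed subspace $V$. The triple $\Lambda=(W_j,\Lambda_j,v_j)$ is a g-fusion frame for $H$ if there exist $0<A\le B<\infty$ with $A\Vert f\Vert^2\le\sum_{j\in\mathbb{J}}v_j^2\Vert\Lambda_j\pi_{W_j}f\Vert^2\le B\Vert f\Vert^2$ for all $f\in H$. Its g-fusion frame operator is $S_\Lambda f=\sum_{j\in\mathbb{J}}v_j^2\pi_{W_j}\Lambda_j^*\Lambda_j\pi_{W_j}f$ (bounded, positive, invertible). $T\le U$ means $\langle Tf,f\rangle\le\langle Uf,f\rangle$ for all $f$. *)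

(* Defs.v *)
From HB Require Import structures.
From mathcomp Require Import all_boot all_order all_algebra.
From mathcomp Require Import boolp classical_sets reals.
From mathcomp Require Export complex.
Set Implicit Arguments.
Unset Strict Implicit.
Unset Printing Implicit Defensive.
Import Order.TTheory GRing.Theory Num.Theory.
Local Open Scope ring_scope.

Section Hilbert.
Variable R : realType.
Local Notation C := R[i].

(* The order on C (numClosedFieldType) is the partial order:
   x <= y  iff  y - x is a nonnegative real. *)

Definition is_hilbert (V : lmodType C) (ip : V -> V -> C) : Prop :=
  [/\ (forall (a : C) (x y z : V), ip (a *: x + y) z = a * ip x z + ip y z),
      (forall x y : V, ip y x = (ip x y)^*),
      (forall x : V, 0 <= ip x x /\ (ip x x = 0 -> x = 0)),
      (forall u : nat -> V,
         (forall e : C, 0 < e -> exists N : nat, forall m n : nat,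
              (N <= m)%N -> (N <= n)%N -> ip (u m - u n) (u m - u n) < e) ->
         exists x : V, forall e : C, 0 < e -> exists N : nat, forall n : nat,
              (N <= n)%N -> ip (u n - x) (u n - x) < e) &
      (exists d : nat -> V, forall (x : V) (e : C), 0 < e ->
              exists k : nat, ip (x - d k) (x - d k) < e)].

(** Unconditional convergence of a sum indexed by a subset D of Z:
    [has_sum n2 D u x] means that the finite partial sums over finite
    subsets of D converge (along the net of finite subsets) to x, where
    n2 is the squared norm. *)
Definition has_sum (V : zmodType) (n2 : V -> C) (D : set int)
    (u : int -> V) (x : V) : Prop :=
  forall e : C, 0 < e -> exists F0 : seq int, (forall j, j \in F0 -> D j) /\
    forall F : seq int, uniq F -> (forall j, j \in F -> D j) ->
      {subset F0 <= F} ->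
      n2 (x - \sum_(j <- F) u j) < e.

Definition cn2 (z : C) : C := z * z^*.

Definition bounded_linear (V W : lmodType C) (ipV : V -> V -> C)
    (ipW : W -> W -> C) (L : V -> W) : Prop :=
  (forall (a : C) (x y : V), L (a *: x + y) = a *: L x + L y) /\
  exists M : C, 0 <= M /\ forall x : V, ipW (L x) (L x) <= M * ipV x x.

Definition is_adjoint (V W : lmodType C) (ipV : V -> V -> C)
    (ipW : W -> W -> C) (L : V -> W) (Ls : W -> V) : Prop :=
  forall (x : V) (y : W), ipW (L x) y = ipV x (Ls y).

Definition closed_subspace (V : lmodType C) (ip : V -> V -> C)
    (Wsp : V -> Prop) : Prop :=
  [/\ Wsp 0,
      (forall (a : C) (x y : V), Wsp x -> Wsp y -> Wsp (a *: x + y)) &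
      (forall x : V, (forall e : C, 0 < e -> exists w, Wsp w /\
                         ip (x - w) (x - w) < e) -> Wsp x)].

Definition is_orth_proj (V : lmodType C) (ip : V -> V -> C)
    (Wsp : V -> Prop) (P : V -> V) : Prop :=
  forall f : V, Wsp (P f) /\ forall w : V, Wsp w -> ip (f - P f) w = 0.

Definition gfusion_frame (H : lmodType C) (ip : H -> H -> C)
    (Hj : int -> lmodType C) (ipj : forall j, Hj j -> Hj j -> C)
    (J : set int) (W : int -> H -> Prop) (P : int -> H -> H)
    (Lam : forall j, H -> Hj j) (v : int -> R) : Prop :=
  [/\ (forall j, J j -> closed_subspace ip (W j) /\ is_orth_proj ip (W j) (P j)),
      (forall j, J j -> 0 < v j),
      (forall j, J j -> bounded_linear ip (@ipj j) (Lam j)) &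
      exists A B : R, [/\ 0 < A, A <= B &
        forall f : H, exists s : C,
          has_sum cn2 J
            (fun j => ((v j) ^+ 2)%:C%C *
                      ipj j (Lam j (P j f)) (Lam j (P j f))) s
          /\ (A%:C%C * ip f f <= s) /\ (s <= B%:C%C * ip f f)]].

Definition is_partial_frame_op (H : lmodType C) (ip : H -> H -> C)
    (Hj : int -> lmodType C) (D : set int) (P : int -> H -> H)
    (Lam : forall j, H -> Hj j) (Lams : forall j, Hj j -> H) (v : int -> R)
    (Sop : H -> H) : Prop :=
  forall f : H, has_sum (fun x => ip x x) D
     (fun j => ((v j) ^+ 2)%:C%C *: P j (Lams j (Lam j (P j f)))) (Sop f).

End Hilbert.

(* Main.v *)
Require Import Defs.
From HB Require Import structures.
From mathcomp Require Import all_boot all_order all_algebra.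
From mathcomp Require Import boolp classical_sets reals complex.
From mathcomp Require Import ring.
Import Order.TTheory GRing.Theory Num.Theory.
Local Open Scope ring_scope.
Set Implicit Arguments.
Unset Strict Implicit.
Unset Printing Implicit Defensive.

Section IP.
Variable R : realType.
Local Notation C := R[i].
Variable V : lmodType C.
Variable ip : V -> V -> C.
Hypothesis ipl : forall (a : C) (x y z : V), ip (a *: x + y) z = a * ip x z + ip y z.
Hypothesis ipc : forall x y : V, ip y x = (ip x y)^*.
Hypothesis ipp : forall x : V, 0 <= ip x x /\ (ip x x = 0 -> x = 0).

Lemma ip0l z : ip 0 z = 0.
Proof.
have := ipl 1 0 0 z; rewrite scaler0 addr0 mul1r => h.
have : ip 0 z + ip 0 z - ip 0 z = ip 0 z - ip 0 z by rewrite -h.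
by rewrite addrK subrr.
Qed.

Lemma ipZl a x z : ip (a *: x) z = a * ip x z.
Proof. by have := ipl a x 0 z; rewrite addr0 ip0l addr0. Qed.

Lemma ipDl x y z : ip (x + y) z = ip x z + ip y z.
Proof. by have := ipl 1 x y z; rewrite scale1r mul1r. Qed.

Lemma ipNl x z : ip (- x) z = - ip x z.
Proof. by rewrite -scaleN1r ipZl mulN1r. Qed.

Lemma ipBl x y z : ip (x - y) z = ip x z - ip y z.
Proof. by rewrite ipDl ipNl. Qed.

Lemma ip0r z : ip z 0 = 0.
Proof. by rewrite ipc ip0l conjC0. Qed.

Lemma ipZr a x z : ip z (a *: x) = a^* * ip z x.
Proof. by rewrite ipc ipZl rmorphM /= -ipc. Qed.

Lemma ipDr x y z : ip z (x + y) = ip z x + ip z y.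
Proof. by rewrite ipc ipDl rmorphD /= -!ipc. Qed.

Lemma ipBr x y z : ip z (x - y) = ip z x - ip z y.
Proof. by rewrite ipc ipBl rmorphB /= -!ipc. Qed.

Lemma ip_sum (F : seq int) (u : int -> V) z :
  ip (\sum_(j <- F) u j) z = \sum_(j <- F) ip (u j) z.
Proof.
elim: F => [|j F IH]; first by rewrite !big_nil ip0l.
by rewrite !big_cons ipDl IH.
Qed.

Lemma ip_real x : (ip x x)^* = ip x x.
Proof. exact: geC0_conj (ipp x).1. Qed.

Lemma ip_def u w : (forall z, ip u z = ip w z) -> u = w.
Proof.
move=> h; apply/eqP; rewrite -subr_eq0; apply/eqP; apply: (ipp _).2.
by rewrite ipBl h subrr.
Qed.

Lemma cauchy_schwarz x y : `|ip x y| ^+ 2 <= ip x x * ip y y.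
Proof.
have [->|ny] := eqVneq y 0.
  by rewrite ip0r normr0 expr0n /= mulr_ge0 // (ipp _).1.
have dpos : 0 < ip y y.
  rewrite lt_def (ipp y).1 andbT; apply/eqP => /(ipp y).2 h.
  by rewrite h eqxx in ny.
set t := ip x y; set d := ip y y.
have hd : d != 0 by rewrite gt_eqF.
have dc : d^* = d by exact: ip_real.
have := (ipp (x - (t / d) *: y)).1.
rewrite !ipBl !ipBr !ipZl !ipZr -/t -/d.
rewrite (ipc x y) -/t rmorphM /= fmorphV /= dc.
move=> H.
have H2 : 0 <= (ip x x - t * t^* / d) * d.
  apply: mulr_ge0; last exact: ltW.
  move: H; congr (0 <= _); field; done.
rewrite normCK -subr_ge0; move: H2; congr (0 <= _); field; done.
Qed.

End IP.
Definition ev (D : set int) (Q : seq int -> Prop) :=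
  exists F0 : seq int, (forall j, j \in F0 -> D j) /\
    forall F : seq int, uniq F -> (forall j, j \in F -> D j) ->
      {subset F0 <= F} -> Q F.

Lemma ev_and D Q1 Q2 : ev D Q1 -> ev D Q2 -> ev D (fun F => Q1 F /\ Q2 F).
Proof.
move=> [F1 [h1 k1]] [F2 [h2 k2]]; exists (F1 ++ F2); split.
  by move=> j; rewrite mem_cat => /orP [/h1|/h2].
move=> F uF sF sub; split.
  by apply: k1 => // j hj; apply: sub; rewrite mem_cat hj.
by apply: k2 => // j hj; apply: sub; rewrite mem_cat hj orbT.
Qed.

Lemma ev_ex D Q : ev D Q -> exists F, [/\ uniq F, (forall j, j \in F -> D j) & Q F].
Proof.
move=> [F0 [h k]]; exists (undup F0); split; first exact: undup_uniq.
  by move=> j; rewrite mem_undup => /h.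
by apply: k; [exact: undup_uniq| move=> j; rewrite mem_undup => /h | move=> j; rewrite mem_undup].
Qed.

Lemma ev_sub (I J : set int) Q : (I `<=` J)%classic -> ev I Q ->
  ev J (fun F => Q [seq j <- F | `[< I j >]]).
Proof.
move=> IJ [F0 [h k]]; exists F0; split; first by move=> j /h /IJ.
move=> F uF sF sub; apply: k; first exact: filter_uniq.
  by move=> j; rewrite mem_filter => /andP [/asboolP].
by move=> j hj; rewrite mem_filter (sub _ hj) andbT; apply/asboolP/h.
Qed.

Section Lim.
Variable R : realType.
Local Notation C := R[i].

Definition lim_ev (D : set int) (s : seq int -> C) (c : C) :=
  forall e : C, 0 < e -> ev D (fun F => `|c - s F| < e).

Lemma small0 (c : C) : (forall e : C, 0 < e -> `|c| < e) -> c = 0.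
Proof.
move=> h; apply/eqP; apply/negPn/negP => nc.
have := h `|c|; rewrite normr_gt0 nc ltxx; by move=> /(_ isT).
Qed.

Lemma lim_ev_uniq D s c1 c2 : lim_ev D s c1 -> lim_ev D s c2 -> c1 = c2.
Proof.
move=> h1 h2; apply/eqP; rewrite -subr_eq0; apply/eqP; apply: small0 => e e0.
have e20 : 0 < e / 2 by rewrite divr_gt0 // ltr0n.
have [F [_ _ [k1 k2]]] := ev_ex (ev_and (h1 _ e20) (h2 _ e20)).
have -> : c1 - c2 = (c1 - s F) - (c2 - s F) by ring.
apply: (le_lt_trans (ler_normB _ _)).
by rewrite (splitr e) ltrD.
Qed.

Lemma lim_ev_ext D s1 s2 c : (forall F, (forall j, j \in F -> D j) -> s1 F = s2 F) ->
  lim_ev D s1 c -> lim_ev D s2 c.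
Proof.
move=> hs h e e0; have [F0 [hF0 k]] := h e e0; exists F0; split => // F uF sF sub.
by rewrite -hs //; apply: k.
Qed.

Lemma lim_ev_add D s1 s2 c1 c2 : lim_ev D s1 c1 -> lim_ev D s2 c2 ->
  lim_ev D (fun F => s1 F + s2 F) (c1 + c2).
Proof.
move=> h1 h2 e e0.
have e20 : 0 < e / 2 by rewrite divr_gt0 // ltr0n.
have [F0 [hF0 k]] := ev_and (h1 _ e20) (h2 _ e20).
exists F0; split => // F uF sF sub; have [k1 k2] := k F uF sF sub.
have -> : c1 + c2 - (s1 F + s2 F) = (c1 - s1 F) + (c2 - s2 F) by ring.
apply: (le_lt_trans (ler_normD _ _)).
by rewrite (splitr e) ltrD.
Qed.

Lemma lim_ev_scale D s c (a : C) : lim_ev D s c ->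
  lim_ev D (fun F => a * s F) (a * c).
Proof.
move=> h e e0.
have a0 : 0 < `|a| + 1 by rewrite ltr_wpDl // normr_ge0.
have e1 : 0 < e / (`|a| + 1) by rewrite divr_gt0.
have [F0 [hF0 k]] := h _ e1.
exists F0; split => // F uF sF sub; have k1 := k F uF sF sub.
rewrite -mulrBr normrM.
have : `|a| * `|c - s F| <= (`|a| + 1) * `|c - s F|.
  by rewrite ler_wpM2r ?normr_ge0 // lerDl ler01.
move/le_lt_trans; apply.
by rewrite mulrC -ltr_pdivlMr.
Qed.

Lemma lim_ev_conj D s c : lim_ev D s c -> lim_ev D (fun F => (s F)^*) c^*.
Proof.
move=> h e e0; have [F0 [hF0 k]] := h e e0; exists F0; split => // F uF sF sub.
by rewrite -rmorphB /= norm_conjC; apply: k.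
Qed.

Lemma lim_ev_ge0 D s c : (forall F, (forall j, j \in F -> D j) -> 0 <= s F) ->
  lim_ev D s c -> 0 <= c.
Proof.
move=> hs h.
have cr : c^* = c.
  apply: (lim_ev_uniq _ h); apply: lim_ev_ext (lim_ev_conj h).
  by move=> F sF; rewrite geC0_conj // hs.
have creal : c \is Num.real by rewrite CrealE cr.
rewrite real_leNgt ?real0 //; apply/negP => c0.
have e0 : 0 < - c by rewrite oppr_gt0.
have [F [_ sF k]] := ev_ex (h _ e0).
have sr : s F \is Num.real by apply: ger0_real; apply: hs.
have := real_ltrNnormlW (rpredB creal sr) k.
rewrite opprK => H.
have : 0 < - s F by rewrite -(ltrD2l c) addr0.
rewrite oppr_gt0 => H2; have := lt_le_trans H2 (hs F sF); by rewrite ltxx.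
Qed.

End Lim.

Lemma lim_ev_sub (R : realType) (I J : set int) s (c : R[i]) : (I `<=` J)%classic ->
  lim_ev I s c -> lim_ev J (fun F => s [seq j <- F | `[< I j >]]) c.
Proof. by move=> IJ h e e0; apply: ev_sub IJ (h e e0). Qed.

Lemma lim_ev_B (R : realType) D s1 s2 (c1 c2 : R[i]) : lim_ev D s1 c1 -> lim_ev D s2 c2 ->
  lim_ev D (fun F => s1 F - s2 F) (c1 - c2).
Proof.
move=> h1 h2; have := lim_ev_add h1 (lim_ev_scale (-1) h2).
rewrite mulN1r; apply: lim_ev_ext => F _; by rewrite mulN1r.
Qed.

Section Op.
Variable R : realType.
Local Notation C := R[i].
Variable V : lmodType C.
Variable ip : V -> V -> C.
Hypothesis ipl : forall (a : C) (x y z : V), ip (a *: x + y) z = a * ip x z + ip y z.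
Hypothesis ipc : forall x y : V, ip y x = (ip x y)^*.
Hypothesis ipp : forall x : V, 0 <= ip x x /\ (ip x x = 0 -> x = 0).

Lemma approx D (uu : int -> V) X z : has_sum (fun x => ip x x) D uu X ->
  lim_ev D (fun F => \sum_(j <- F) ip (uu j) z) (ip X z).
Proof.
move=> hs e e0.
have M0 : 0 < ip z z + 1 by rewrite ltr_wpDl ?ltr01 // (ipp z).1.
have e'0 : 0 < e ^+ 2 / (ip z z + 1) by rewrite divr_gt0 // exprn_gt0.
have [F0 [hF0 k]] := hs _ e'0; exists F0; split => // F uF sF sub.
have kk := k F uF sF sub.
rewrite -(ip_sum ipl) -(ipBl ipl).
set d := X - _ in kk *.
rewrite -(ltr_pXn2r (n:=2)) // ?nnegrE ?normr_ge0 ?ltW //.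
apply: le_lt_trans (cauchy_schwarz ipl ipc ipp d z) _.
apply: (@le_lt_trans _ _ (ip d d * (ip z z + 1))).
  by rewrite ler_wpM2l ?(ipp d).1 // lerDl ler01.
by rewrite -(divfK (lt0r_neq0 M0) (e ^+ 2)) ltr_pM2r.
Qed.

Variable D : set int.
Variable u : V -> int -> V.
Variable q : V -> V -> int -> C.
Variable A : V -> V.
Hypothesis huq : forall x y j, D j -> ip (u x j) y = q x y j.
Hypothesis hA : forall x, has_sum (fun x => ip x x) D (u x) (A x).

Lemma approxq x z : lim_ev D (fun F => \sum_(j <- F) q x z j) (ip (A x) z).
Proof.
apply: lim_ev_ext (approx z (hA x)) => F sF.
by apply: eq_big_seq => j /sF Dj; rewrite huq.
Qed.

Hypothesis hql : forall a x y z j, D j -> q (a *: x + y) z j = a * q x z j + q y z j.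

Lemma A_lin a x y : A (a *: x + y) = a *: A x + A y.
Proof.
apply: (ip_def ipl ipp) => z; rewrite (ipDl ipl) (ipZl ipl).
apply: lim_ev_uniq (approxq (a *: x + y) z) _.
apply: lim_ev_ext (lim_ev_add (lim_ev_scale a (approxq x z)) (approxq y z)).
move=> F sF; rewrite mulr_sumr -big_split /=; apply: eq_big_seq => j /sF Dj.
by rewrite hql.
Qed.

Hypothesis hqc : forall x y j, D j -> q y x j = (q x y j)^*.

Lemma A_herm x y : ip (A x) y = ip x (A y).
Proof.
rewrite (ipc (A y) x).
apply: lim_ev_uniq (approxq x y) _.
apply: lim_ev_ext (lim_ev_conj (approxq y x)).
move=> F sF; rewrite rmorph_sum; apply: eq_big_seq => j /sF Dj.
by rewrite (hqc y x).
Qed.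

Hypothesis hqp : forall x j, D j -> 0 <= q x x j.

Lemma A_pos x : 0 <= ip (A x) x.
Proof.
apply: lim_ev_ge0 (approxq x x) => F sF.
by rewrite big_seq sumr_ge0 // => j /sF Dj; apply: hqp.
Qed.

End Op.

Lemma A_mono (R : realType) (V : lmodType R[i]) (ip : V -> V -> R[i])
  (ipl : forall (a : R[i]) (x y z : V), ip (a *: x + y) z = a * ip x z + ip y z)
  (ipc : forall x y : V, ip y x = (ip x y)^*)
  (ipp : forall x : V, 0 <= ip x x /\ (ip x x = 0 -> x = 0))
  (I J : set int) (u : V -> int -> V) (q : V -> V -> int -> R[i]) (AI AJ : V -> V) :
  (I `<=` J)%classic ->
  (forall x y j, J j -> ip (u x j) y = q x y j) ->
  (forall x j, J j -> 0 <= q x x j) ->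
  (forall x, has_sum (fun x => ip x x) J (u x) (AJ x)) ->
  (forall x, has_sum (fun x => ip x x) I (u x) (AI x)) ->
  forall x, 0 <= ip (AJ x) x - ip (AI x) x.
Proof.
move=> IJ huq hqp hJ hI x.
have hJx := approxq ipl ipc ipp huq hJ x x.
have hIx := approxq ipl ipc ipp (fun x y j Ij => huq x y j (IJ j Ij)) hI x x.
apply: lim_ev_ge0 (lim_ev_B hJx (lim_ev_sub IJ hIx)) => F.
rewrite subr_ge0; elim: F => [|j F IH] sF; first by rewrite big_nil.
have Jj : J j by apply: sF; rewrite inE eqxx.
have sF' : forall k, k \in F -> J k by move=> k hk; apply: sF; rewrite inE hk orbT.
rewrite /= big_cons; case: ifP => _.
  by rewrite big_cons lerD2l IH.
by apply: (le_trans (IH sF')); rewrite lerDr hqp.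
Qed.

Lemma proj_facts (R : realType) (V : lmodType R[i]) (ip : V -> V -> R[i])
  (ipl : forall (a : R[i]) (x y z : V), ip (a *: x + y) z = a * ip x z + ip y z)
  (ipc : forall x y : V, ip y x = (ip x y)^*)
  (ipp : forall x : V, 0 <= ip x x /\ (ip x x = 0 -> x = 0))
  (W : V -> Prop) (P : V -> V) :
  closed_subspace ip W -> is_orth_proj ip W P ->
  (forall a y, ip (P a) y = ip a (P y)) /\
  (forall a x y, P (a *: x + y) = a *: P x + P y).
Proof.
move=> [W0 Wl _] orth.
have projP : forall z w, W w -> ip (P z) w = ip z w.
  move=> z w Ww; have := (orth z).2 w Ww; rewrite (ipBl ipl) => /eqP.
  by rewrite subr_eq0 => /eqP.
split.
  move=> a y; rewrite -(projP a (P y)); last exact: (orth y).1.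
  have : ip (P a) (y - P y) = 0.
    by rewrite ipc (orth y).2 ?rmorph0 //; exact: (orth a).1.
  by rewrite (ipBr ipl ipc) => /eqP; rewrite subr_eq0 => /eqP.
move=> a x y.
have Wd : W (P (a *: x + y) - (a *: P x + P y)).
  rewrite -scaleN1r addrC; apply: (Wl); last exact: (orth _).1.
  by apply: (Wl); apply: (orth _).1.
apply/eqP; rewrite -subr_eq0; apply/eqP; apply: (ipp _).2.
rewrite {2}[P (a *: x + y) - _]lock (ipBl ipl) (ipDl ipl) (ipZl ipl) -lock.
by rewrite !projP // ipl subrr.
Qed.

Theorem corollary3p3 (R : realType)
  (H : lmodType R[i]) (ip : H -> H -> R[i])
  (Hj : int -> lmodType R[i]) (ipj : forall j, Hj j -> Hj j -> R[i])
  (J I : set int) (W : int -> H -> Prop) (P : int -> H -> H)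
  (Lam : forall j, H -> Hj j) (Lams : forall j, Hj j -> H) (v : int -> R)
  (S SI Sinv : H -> H) :
  is_hilbert ip ->
  (forall j, J j -> is_hilbert (@ipj j)) ->
  (forall j, J j -> is_adjoint ip (@ipj j) (Lam j) (Lams j)) ->
  gfusion_frame ip ipj J W P Lam v ->
  is_partial_frame_op ip J P Lam Lams v S ->
  (forall f, S (Sinv f) = f) -> (forall f, Sinv (S f) = f) ->
  (I `<=` J)%classic ->
  is_partial_frame_op ip I P Lam Lams v SI ->
  forall f : H,
    0 <= ip (SI f - SI (Sinv (SI f))) f /\
    ip (SI f - SI (Sinv (SI f))) f <= 4^-1 * ip (S f) f.
Proof.
move=> hH hHj hadj [hPW hv hLam _] hS hSinv1 _ IJ hSI f.
case: hH => ipl ipc ipp _ _.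
pose u x j := ((v j) ^+ 2)%:C%C *: P j (Lams j (Lam j (P j x))).
pose q x y j := ((v j) ^+ 2)%:C%C * ipj j (Lam j (P j x)) (Lam j (P j y)).
have hc : forall j, 0 <= ((v j) ^+ 2)%:C%C :> R[i] by move=> j; rewrite ler0c sqr_ge0.
have huq : forall x y j, J j -> ip (u x j) y = q x y j.
  move=> x y j Jj; have [pself _] := proj_facts ipl ipc ipp (hPW j Jj).1 (hPW j Jj).2.
  case: (hHj j Jj) => _ ipjc _ _ _.
  by rewrite /u /q (ipZl ipl) pself ipc -hadj // (ipjc (Lam j (P j y))).
have hql : forall a x y z j, J j -> q (a *: x + y) z j = a * q x z j + q y z j.
  move=> a x y z j Jj; have [_ plin] := proj_facts ipl ipc ipp (hPW j Jj).1 (hPW j Jj).2.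
  case: (hHj j Jj) => ipjl _ _ _ _.
  rewrite /q plin (hLam j Jj).1 ipjl; ring.
have hqc : forall x y j, J j -> q y x j = (q x y j)^*.
  move=> x y j Jj; case: (hHj j Jj) => _ ipjc _ _ _.
  have cj : forall (c z : R[i]), 0 <= c -> (c * z)^* = c * z^*.
    by move=> c z c0; rewrite rmorphM /= geC0_conj.
  by rewrite /q cj // (ipjc (Lam j (P j x))).
have hqp : forall x j, J j -> 0 <= q x x j.
  move=> x j Jj; case: (hHj j Jj) => _ _ ipjp _ _.
  by rewrite /q mulr_ge0 // (ipjp _).1.
have hJ : forall x, has_sum (fun x => ip x x) J (u x) (S x) by exact: hS.
have hI : forall x, has_sum (fun x => ip x x) I (u x) (SI x) by exact: hSI.
have huqI : forall x y j, I j -> ip (u x j) y = q x y j by move=> x y j /IJ; apply: huq.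
have hqlI : forall a x y z j, I j -> q (a *: x + y) z j = a * q x z j + q y z j.
  by move=> a x y z j /IJ; apply: hql.
have hqcI : forall x y j, I j -> q y x j = (q x y j)^* by move=> x y j /IJ; apply: hqc.
have hqpI : forall x j, I j -> 0 <= q x x j by move=> x j /IJ; apply: hqp.
have linS := A_lin ipl ipc ipp huq hJ hql.
have linA := A_lin ipl ipc ipp huqI hI hqlI.
have hermS := A_herm ipl ipc ipp huq hJ hqc.
have hermA := A_herm ipl ipc ipp huqI hI hqcI.
have posS := A_pos ipl ipc ipp huq hJ hqp.
have posA := A_pos ipl ipc ipp huqI hI hqpI.
have posB := A_mono ipl ipc ipp IJ huq hqp hJ hI.
set h := Sinv (SI f).
have Sh : S h = SI f := hSinv1 _.
have K : forall a b : R[i], 0 <= a -> a = b -> 0 <= b by move=> a b ? <-.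
have linB : forall x y, SI (x - y) = SI x - SI y.
  move=> x y; have -> : x - y = (-1) *: y + x by rewrite scaleN1r addrC.
  by rewrite linA scaleN1r addrC.
split.
  have Hp := addr_ge0 (posA (f - h)) (posB h).
  rewrite (ipBl ipl); apply: (K _ _ Hp).
  rewrite linB Sh !(ipBl ipl) !(ipBr ipl ipc); ring.
have e1 : ip (S f) h = ip (SI f) f by rewrite hermS Sh -hermA.
have e2 : ip (SI f) h = ip (SI h) f by rewrite (hermA h f) -Sh hermS.
have cc : (- 2^-1 : R[i])^* = - 2^-1.
  by rewrite rmorphN /= geC0_conj // invr_ge0 ler0n.
have Hp := posS ((- 2^-1) *: f + h).
rewrite linS Sh !(ipDl ipl) !(ipZl ipl) !(ipDr ipl ipc) !(ipZr ipl ipc) cc in Hp.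
rewrite e1 e2 in Hp.
rewrite (ipBl ipl) -subr_ge0; apply: (K _ _ Hp).
by field.
Qed.
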